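(* Let $H\in\mathbb{R}^{n_z\times n_z}$ be symmetric positive definite, $F\in\mathbb{R}^{n_x\times n_z}$, $G\in\mathbb{R}^{n_c\times n_z}$, $S\in\mathbb{R}^{n_c\times n_x}$, $w\in\mathbb{R}^{n_c}$, and assume $\{z: Gz\le Sx+w\}\neq\emptyset$ for every $x\in\mathbb{R}^{n_x}$. Assume LICQ: for every $x$, the rows $\{G_j: j\in\mathbb{A}(x)\}$ are linearly independent. Let $\kappa$ be a global Lipschitz constant, $x,\hat{x}\in\mathbb{R}^{n_x}$, and $$\mathbb{I}(x)=\mathbb{A}(\hat{x})\cup\big\{j\in\mathbb{A}^c(\hat{x}): \mathcal{B}(z^*(\hat{x}),\kappa\|x-\hat{x}\|)\not\subseteq\mathcal{Z}_j(x)\big\}.$$ If $\|x-\hat{x}\|\le\sigma_i/\sqrt{1+\kappa^2}$ for some $i\in\{1,\dots,n_c\}$, then $|\mathbb{I}(x)|\le n_z+i$.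
   Context: mp-QP$(x)$: minimize $V(z)=\frac12z^THz+x^TFz$ over $\mathcal{Z}(x)=\{z: Gz\le Sx+w\}$. $G_j,S_j$ are $j$-th rows, $w_j$ the $j$-th entry, $\mathcal{Z}_j(x)=\{z: G_jz\le S_jx+w_j\}$. $z^*(x,\mathbb{I})$ is the unique minimizer of $V$ subject only to constraints indexed by $\mathbb{I}\subseteq\{1,\dots,n_c\}$; $z^*(x)=z^*(x,\{1,\dots,n_c\})$. $\mathbb{A}(x)=\{j: G_jz^*(x)=S_jx+w_j\}$, $\mathbb{A}^c(x)$ its complement in $\{1,\dots,n_c\}$. A global Lipschitz constant is $\kappa\in\mathbb{R}$ with $\|z^*(x_1,\mathbb{I})-z^*(x_2,\mathbb{I})\|\le\kappa\|x_1-x_2\|$ for all $x_1,x_2,\mathbb{I}$. With $\bar H=[-S,\;G]$, rows $\bar H_j$, $\mathcal{V}=\{v\in\mathbb{R}^{n_x+n_z}:\bar Hv\le w\}$, $\mathcal{V}_j=\{v:\bar H_jv\le w_j\}$, define $\sigma_i=\sup\{r\ge0: \inf_{v\in\mathcal{V}}|\{j: \mathcal{B}(v,r)\subseteq\mathcal{V}_j\}|\ge n_c-i\}\in[0,+\infty]$. $\mathcal{B}(q,r)$ is the closed Euclidean ball. *)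

(* Defs.v *)
From HB Require Import structures.
From mathcomp Require Import all_boot all_order all_algebra.
From mathcomp Require Import boolp classical_sets reals constructive_ereal ereal.
Set Implicit Arguments. Unset Strict Implicit. Unset Printing Implicit Defensive.
Import Order.TTheory GRing.Theory Num.Theory.
Local Open Scope classical_set_scope.
Local Open Scope ring_scope.

Section MPQP.
Variables (R : realType) (nx nz nc : nat).
Variables (H : 'M[R]_nz) (F : 'M[R]_(nx, nz)) (G : 'M[R]_(nc, nz))
          (S : 'M[R]_(nc, nx)) (w : 'cV[R]_nc).

Definition enorm (k : nat) (v : 'cV[R]_k) : R := Num.sqrt (\sum_i (v i 0) ^+ 2).

Definition eball (k : nat) (q : 'cV[R]_k) (r : R) : set 'cV[R]_k :=
  [set p | enorm (p - q) <= r].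

Definition cost (x : 'cV[R]_nx) (z : 'cV[R]_nz) : R :=
  2^-1 * (z^T *m H *m z) 0 0 + (x^T *m F *m z) 0 0.

Definition Zj (x : 'cV[R]_nx) (j : 'I_nc) : set 'cV[R]_nz :=
  [set z | (G *m z) j 0 <= (S *m x) j 0 + w j 0].

Definition is_minimizer (x : 'cV[R]_nx) (I : {set 'I_nc}) (z : 'cV[R]_nz) : Prop :=
  (forall j, j \in I -> Zj x j z) /\
  (forall z', (forall j, j \in I -> Zj x j z') -> cost x z <= cost x z').

Definition zstarI (x : 'cV[R]_nx) (I : {set 'I_nc}) : 'cV[R]_nz :=
  xget 0 [set z | is_minimizer x I z].

Definition zstar (x : 'cV[R]_nx) : 'cV[R]_nz := zstarI x [set: 'I_nc]%SET.

Definition active (x : 'cV[R]_nx) : {set 'I_nc} :=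
  [set j | (G *m zstar x) j 0 == (S *m x) j 0 + w j 0].

Definition Iset (kappa : R) (xhat x : 'cV[R]_nx) : {set 'I_nc} :=
  active xhat :|: [set j in ~: active xhat |
     `[< ~ (eball (zstar xhat) (kappa * enorm (x - xhat)) `<=` Zj x j) >]].

Definition Hbar : 'M[R]_(nc, nx + nz) := row_mx (- S) G.
Definition Vj (j : 'I_nc) : set 'cV[R]_(nx + nz) :=
  [set v | (Hbar *m v) j 0 <= w j 0].
Definition Vset : set 'cV[R]_(nx + nz) := [set v | forall j, Vj j v].

(* sigma_i = sup { r >= 0 : inf_{v in V} |{ j : B(v, r) ⊆ V_j }| >= nc - i }
   (the infimum over v of a natural-number valued function is >= nc - i
    iff every value is >= nc - i) *)
Definition sigma (i : nat) : \bar R :=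
  ereal_sup [set r%:E | r in
    [set r : R | 0 <= r /\
       forall v, Vset v ->
         (nc - i <= #|[set j : 'I_nc | `[< eball v r `<=` Vj j >]]|)%N]].

End MPQP.

(* Main.v *)
Require Import Defs.
From HB Require Import structures.
From mathcomp Require Import all_boot all_order all_algebra.
From mathcomp Require Import boolp classical_sets reals constructive_ereal ereal.
From mathcomp Require Import topology normedtype derive.
From mathcomp Require Import ring lra zify.
Import Order.TTheory GRing.Theory Num.Theory.
Local Open Scope classical_set_scope.
Local Open Scope ring_scope.
Module Topo.
Import numFieldTopology.Exports numFieldNormedType.Exports.

Section Cont.
Variable R : realType.

Lemma cont_sum (T : topologicalType) (I : finType) (f : I -> T -> R) :
  (forall i, continuous (f i)) -> continuous (fun x => \sum_i f i x).
Proof.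
move=> fc; apply: (@continuous_big _ _ +%R 0 _ add_continuous T) => i _.
exact: fc.
Qed.

Lemma cont_mul (T : topologicalType) (f g : T -> R) :
  continuous f -> continuous g -> continuous (fun x => f x * g x).
Proof. by move=> fc gc x; exact: (continuousM (fc x) (gc x)). Qed.

Lemma cont_add (T : topologicalType) (f g : T -> R) :
  continuous f -> continuous g -> continuous (fun x => f x + g x).
Proof. by move=> fc gc x; exact: (continuousD (fc x) (gc x)). Qed.

Lemma cont_coord n (i : 'I_n) : continuous (fun u : 'rV[R]_n => u ord0 i).
Proof. exact: coord_continuous. Qed.

Lemma entry_le_norm m n (M : 'M[R]_(m, n)) i j : `|M i j| <= `|M|.
Proof.
rewrite [X in _ <= X]/Num.norm /= mx_normrE.
exact: (@le_bigmax _ _ _ 0 (fun ij : 'I_m * 'I_n => `|M ij.1 ij.2|) (i, j)).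
Qed.

End Cont.

Section Exist.
Variables (R : realType) (n : nat).

Lemma cont_lin m (A : 'M[R]_(m, n)) i :
  continuous (fun u : 'rV[R]_n => (A *m u^T) i 0).
Proof.
have -> : (fun u : 'rV[R]_n => (A *m u^T) i 0) =
          (fun u => \sum_k A i k * u ord0 k).
  by apply: funext => u; rewrite mxE; apply: eq_bigr => k _; rewrite mxE.
apply: cont_sum => k; apply: cont_mul; first exact: cst_continuous.
exact: cont_coord.
Qed.

Lemma cont_quad (H : 'M[R]_n) :
  continuous (fun u : 'rV[R]_n => ((u^T)^T *m H *m u^T) 0 0).
Proof.
have -> : (fun u : 'rV[R]_n => ((u^T)^T *m H *m u^T) 0 0) =
          (fun u => \sum_j (\sum_k u ord0 k * H k j) * u ord0 j).
  apply: funext => u; rewrite trmxK mxE; apply: eq_bigr => j _.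
  by rewrite !mxE; congr (_ * _); apply: eq_bigr => k _.
apply: cont_sum => j; apply: cont_mul; last exact: cont_coord.
apply: cont_sum => k; apply: cont_mul; first exact: cont_coord.
exact: cst_continuous.
Qed.

End Exist.

Section Coer.
Variables (R : realType) (n : nat).

Lemma trmxZ' m p (a : R) (M : 'M[R]_(m, p)) : (a *: M)^T = a *: M^T.
Proof. by apply/matrixP => i j; rewrite !mxE. Qed.

Lemma quadZ (H : 'M[R]_n) (a : R) (z : 'cV[R]_n) :
  ((a *: z)^T *m H *m (a *: z)) 0 0 = a ^+ 2 * (z^T *m H *m z) 0 0.
Proof.
rewrite trmxZ' -scalemxAl -scalemxAr.
by rewrite -scalemxAl scalerA !mxE expr2.
Qed.

Lemma coercive (H : 'M[R]_n)
  (H_pd : forall z : 'cV[R]_n, z != 0 -> 0 < (z^T *m H *m z) 0 0) :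
  exists2 lam : R, 0 < lam &
    forall z : 'cV[R]_n, lam * `|z^T| ^+ 2 <= (z^T *m H *m z) 0 0.
Proof.
pose Sph := [set u : 'rV[R]_n | `|u| = 1].
have key : forall z : 'cV[R]_n, z != 0 -> Sph (`|z^T|^-1 *: z^T).
  move=> z z0; rewrite /Sph /= normrZ.
  have zT0 : z^T != 0 by apply: contra z0 => /eqP/(congr1 trmx); rewrite trmxK trmx0 => ->.
  have t0 : 0 < `|z^T| by rewrite normr_gt0.
  by rewrite ger0_norm ?invr_ge0 ?ltW // mulVf // gt_eqF.
have zero_case : forall lam : R, forall z : 'cV[R]_n, z = 0 ->
    lam * `|z^T| ^+ 2 <= (z^T *m H *m z) 0 0.
  by move=> lam z ->; rewrite trmx0 normr0 expr0n /= mulr0 mulmx0 mxE.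
have [[u0 hu0]|Sph0] := pselect (Sph !=set0); last first.
  exists 1 => // z; have [->|z0] := eqVneq z 0; first exact: zero_case.
  by exfalso; apply: Sph0; exists (`|z^T|^-1 *: z^T); exact: key.
have cSph : compact Sph.
  apply: bounded_closed_compact.
    exists 1; split; first by rewrite num_real.
    by move=> M hM u /= ->; rewrite ltW.
  have -> : Sph = ((@Num.norm _ _ : 'rV[R]_n -> R) @^-1` [set x : R | x <= 1]) `&` ((@Num.norm _ _ : 'rV[R]_n -> R) @^-1` [set x : R | 1 <= x]).
    apply/seteqP; split => u /=; first by move=> ->; rewrite lexx.
    by move=> [h1 h2]; apply/eqP; rewrite eq_le h1 h2.
  apply: closedI; apply: (proj1 (continuous_closedP _) (@norm_continuous _ _)).
    exact: closed_le.
  exact: closed_ge.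
have [c cS cmin] := compact_EVT_min (ex_intro _ u0 hu0) cSph
   (@continuous_subspaceT _ _ Sph _ (@cont_quad R n H)).
move: cS; rewrite inE => cS.
exists (((c^T)^T *m H *m c^T) 0 0).
  apply: H_pd; apply/eqP => /(congr1 trmx); rewrite trmxK trmx0 => c0.
  by move: cS; rewrite /Sph /= c0 normr0 => /eqP; rewrite eq_sym oner_eq0.
move=> z; have [->|z0] := eqVneq z 0; first exact: zero_case.
have zT0 : z^T != 0 by apply: contra z0 => /eqP/(congr1 trmx); rewrite trmxK trmx0 => ->.
have t0 : 0 < `|z^T| by rewrite normr_gt0.
have := cmin _ (mem_set (key z z0)).
rewrite trmxZ' trmxK quadZ trmxK => h.
have := ler_wpM2r (ltW (exprn_gt0 2 t0)) h.
move=> h2; apply: le_trans h2 _.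
rewrite trmxK; set t := `|z^T|; set Q := (z^T *m H *m z) 0 0.
rewrite mulrC mulrA -exprMn mulrV ?unitfE ?gt_eqF // expr1n mul1r.
by [].
Qed.

End Coer.

Section Ex.
Variables (R : realType) (nx nz nc : nat).
Variables (H : 'M[R]_nz) (F : 'M[R]_(nx, nz)) (G : 'M[R]_(nc, nz))
          (S : 'M[R]_(nc, nx)) (w : 'cV[R]_nc).
Hypothesis H_pd : forall z : 'cV[R]_nz, z != 0 -> 0 < (z^T *m H *m z) 0 0.

Lemma lin_bound (a : 'rV[R]_nz) (z : 'cV[R]_nz) :
  `|(a *m z) 0 0| <= (\sum_j `|a 0 j|) * `|z^T|.
Proof.
rewrite mxE big_distrl /=; apply: le_trans (ler_norm_sum _ _ _) _.
apply: ler_sum => j _; rewrite normrM ler_wpM2l //.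
by have := @entry_le_norm R _ _ (z^T) 0 j; rewrite mxE.
Qed.

Lemma exists_min (x : 'cV[R]_nx) :
  (exists z, forall j, Zj G S w x j z) ->
  exists z, is_minimizer H F G S w x [set: 'I_nc]%SET z.
Proof.
move=> [z0 hz0].
have [lam lam0 hlam] := @coercive R nz H H_pd.
pose f := fun u : 'rV[R]_nz => cost H F x u^T.
pose c0 := cost H F x z0.
pose C := \sum_j `|(x^T *m F) 0 j|.
have C0 : 0 <= C by apply: sumr_ge0 => j _.
pose K := (\bigcap_(j in [set: 'I_nc]) [set u : 'rV[R]_nz | Zj G S w x j u^T])
          `&` [set u | f u <= c0].
have fcont : continuous f.
  apply: cont_add; last exact: cont_lin.
  apply: cont_mul; first exact: cst_continuous.
  exact: cont_quad.
have cK : compact K.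
  apply: bounded_closed_compact; last first.
    apply: closedI.
      apply: closed_bigI => j _.
      apply: (proj1 (continuous_closedP _) (@cont_lin R nz nc G j)
                [set t | t <= (S *m x) j 0 + w j 0]).
      exact: closed_le.
    apply: (proj1 (continuous_closedP _) fcont [set t | t <= c0]).
    exact: closed_le.
  pose M0 := 2 * (C + `|c0|) / lam + 1.
  exists M0; split; first by rewrite num_real.
  move=> M hM u [_ /= hu].
  apply: le_trans (ltW hM); rewrite leNgt; apply/negP => ht.
  set t := `|u| in ht.
  have t0 : 0 <= t by exact: normr_ge0.
  have hq := hlam u^T; rewrite trmxK -/t in hq.
  have hl := lin_bound (x^T *m F) u^T; rewrite trmxK -/t -/C in hl.
  move: hu; rewrite /f /cost.
  move: hl; rewrite ler_norml => /andP[hl _].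
  have hM0 : lam * M0 = 2 * (C + `|c0|) + lam.
    rewrite /M0; field; rewrite gt_eqF //.
  have h1 : 0 < (t - M0) * (lam * t).
    apply: mulr_gt0; first by rewrite subr_gt0.
    by apply: mulr_gt0 => //; apply: le_lt_trans ht; rewrite /M0 addr_ge0 // divr_ge0 // ?mulr_ge0 ?addr_ge0 // ltW.
  have h2 : 0 <= (t - 1) * `|c0|.
    apply: mulr_ge0 => //; rewrite subr_ge0; apply: ltW; apply: le_lt_trans ht.
    by rewrite lerDr divr_ge0 // ?mulr_ge0 ?addr_ge0 // ltW.
  have h3 : lam * M0 * t = (2 * (C + `|c0|) + lam) * t by rewrite hM0.
  have hc0 : c0 <= `|c0| := ler_norm c0.
  move=> hu.
  have e1 : (t - M0) * (lam * t) = lam * t ^+ 2 - lam * M0 * t by rewrite expr2; ring.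
  rewrite trmxK in hu.
  nra.
have K0 : K !=set0.
  exists z0^T; split; first by move=> j _ /=; rewrite trmxK; exact: hz0.
  by rewrite /= /f trmxK.
have [c cK' cmin] := compact_EVT_min K0 cK (@continuous_subspaceT _ _ K _ fcont).
move: cK'; rewrite inE => -[cZ cf].
exists c^T; split; first by move=> j _; exact: (cZ j I).
move=> z' hz'.
have [le|lt] := leP (cost H F x z') c0.
  have hK : K z'^T.
    split => /=; last by rewrite /f /= trmxK.
    move=> j _ /=; have -> : (z'^T)^T = z' by exact: trmxK.
    by apply: hz'; rewrite finset.in_setT.
  by have := cmin _ (mem_set hK); rewrite /f trmxK.
by apply: le_trans (ltW lt).
Qed.

End Ex.

End Topo.
Import Topo.

Lemma licq_card (R : fieldType) (nc nz : nat) (A : {set 'I_nc}) (G : 'M[R]_(nc, nz)) :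
  (forall c : 'I_nc -> R, \sum_(j in A) c j *: row j G = 0 ->
     forall j, j \in A -> c j = 0) -> (#|A| <= nz)%N.
Proof.
move=> licq.
pose M := \matrix_(i < #|A|) row (enum_val i) G.
have : row_free M.
  apply: inj_row_free => v hv.
  pose c j := \sum_(i < #|A| | enum_val i == j) v 0 i.
  have cE : forall i, c (enum_val i) = v 0 i.
    move=> i; rewrite /c (big_pred1 i) // => i'.
    by rewrite /= (inj_eq enum_val_inj).
  have hsum : \sum_(j in A) c j *: row j G = 0.
    rewrite big_enum_val -[RHS]hv mulmx_sum_row; apply: eq_bigr => i _.
    by rewrite cE rowK.
  by apply/rowP => i; rewrite mxE -cE (licq c hsum) // enum_valP.
rewrite /row_free => /eqP <-; exact: rank_leq_col.
Qed.

Section En.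
Variable R : realType.

Lemma enorm_ge0 k (v : 'cV[R]_k) : 0 <= enorm v.
Proof. exact: sqrtr_ge0. Qed.

Lemma enormZ k (a : R) (v : 'cV[R]_k) : enorm (a *: v) = `|a| * enorm v.
Proof.
rewrite /enorm -sqrtr_sqr -sqrtrM ?sqr_ge0 // mulr_sumr; congr Num.sqrt.
by apply: eq_bigr => i _; rewrite mxE exprMn.
Qed.

Lemma enorm_eq0 k (v : 'cV[R]_k) : enorm v = 0 -> v = 0.
Proof.
move=> /eqP; rewrite /enorm sqrtr_eq0 => hle.
have hs : \sum_i v i 0 ^+ 2 = 0.
  by apply/eqP; rewrite eq_le hle sumr_ge0 // => i _; exact: sqr_ge0.
apply/matrixP => i j; rewrite (ord1 j) mxE.
have h0 := psumr_eq0P (fun i _ => sqr_ge0 (v i 0)) hs; have := h0 i isT.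
by move/eqP; rewrite sqrf_eq0 => /eqP.
Qed.

Lemma enorm_col m p (a : 'cV[R]_m) (b : 'cV[R]_p) :
  enorm (col_mx a b) = Num.sqrt (enorm a ^+ 2 + enorm b ^+ 2).
Proof.
rewrite /enorm !sqr_sqrtr ?sumr_ge0 // => [|i _|i _]; last 2 first.
- exact: sqr_ge0.
- exact: sqr_ge0.
by rewrite big_split_ord /=; congr (Num.sqrt (_ + _)); apply: eq_bigr => i _;
  rewrite ?col_mxEu ?col_mxEd.
Qed.

End En.

Lemma Hbar_col (R : realType) nx nz nc (G : 'M[R]_(nc, nz)) (S : 'M[R]_(nc, nx))
  (u : 'cV[R]_nx) (y : 'cV[R]_nz) j :
  (Hbar G S *m col_mx u y) j 0 = - (S *m u) j 0 + (G *m y) j 0.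
Proof. by rewrite /Hbar mul_row_col mulNmx !mxE. Qed.

Theorem theorem3 (R : realType) (nx nz nc : nat)
  (H : 'M[R]_nz) (F : 'M[R]_(nx, nz)) (G : 'M[R]_(nc, nz))
  (S : 'M[R]_(nc, nx)) (w : 'cV[R]_nc)
  (H_sym : H^T = H)
  (H_pd : forall z : 'cV[R]_nz, z != 0 -> 0 < (z^T *m H *m z) 0 0)
  (feasible : forall x : 'cV[R]_nx, exists z : 'cV[R]_nz,
      forall j, Zj G S w x j z)
  (LICQ : forall (x : 'cV[R]_nx) (c : 'I_nc -> R),
      \sum_(j in active H F G S w x) c j *: row j G = 0 ->
      forall j, j \in active H F G S w x -> c j = 0)
  (kappa : R)
  (kappa_lip : forall (x1 x2 : 'cV[R]_nx) (I : {set 'I_nc}),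
      enorm (zstarI H F G S w x1 I - zstarI H F G S w x2 I)
        <= kappa * enorm (x1 - x2))
  (x xhat : 'cV[R]_nx) (i : nat) (hi1 : (1 <= i)%N) (hinc : (i <= nc)%N)
  (hsig : ((enorm (x - xhat))%:E <=
           sigma G S w i * ((Num.sqrt (1 + kappa ^+ 2))^-1)%:E)%E) :
  (#|Iset H F G S w kappa xhat x| <= nz + i)%N.
Proof.
set A := active H F G S w xhat.
set zh := zstar H F G S w xhat.
have feas_zh : forall j, Zj G S w xhat j zh.
  have := xgetPex 0 (@exists_min R nx nz nc H F G S w H_pd xhat (feasible xhat)) => -[hz _] j.
  by apply: hz; rewrite finset.in_setT.
have cardA : (#|A| <= nz)%N := @licq_card R nc nz A G (LICQ xhat).
set Bad := [set j in ~: A | `[< ~ (eball zh (kappa * enorm (x - xhat)) `<=` Zj G S w x j) >]].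
have -> : Iset H F G S w kappa xhat x = A :|: Bad by [].
suff cB : (#|Bad| <= i)%N.
  by rewrite cardsU; apply: leq_trans (leq_subr _ _) _; rewrite leq_add.
have [B0|[j0 j0B]] := set_0Vmem Bad; first by rewrite B0 cards0.
set d := enorm (x - xhat).
set s := Num.sqrt (1 + kappa ^+ 2).
have s0 : 0 < s by rewrite sqrtr_gt0; apply: lt_le_trans (ltr01) _; rewrite lerDl sqr_ge0.
set r := d * s.
set vh : 'cV[R]_(nx + nz) := col_mx xhat zh.
have vhV : forall j, Vj G S w j vh.
  by move=> j; rewrite /Vj /= Hbar_col; have := feas_zh j; rewrite /Zj /=; lra.
have claim : forall j, exists q : 'cV[R]_(nx + nz), j \in Bad ->
    enorm (q - vh) < r /\ ~ Vj G S w j q.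
  move=> j; have [jB|jB] := boolP (j \in Bad); last by exists 0.
  move: (jB); rewrite inE => /andP[_ /asboolP hns].
  have [z [hz1 hz2]] : exists z, eball zh (kappa * d) z /\ ~ Zj G S w x j z.
    apply: contrapT => hne; apply: hns => z hz; apply: contrapT => hz'.
    by apply: hne; exists z.
  set p : 'cV[R]_(nx + nz) := col_mx x z.
  set a := (Hbar G S *m vh) j 0.
  set b := (Hbar G S *m p) j 0.
  have ha : a <= w j 0 by exact: vhV.
  have hb : w j 0 < b.
    rewrite /b Hbar_col; move: hz2; rewrite /Zj /= => /negP; rewrite -ltNge; lra.
  set e := enorm (p - vh).
  have e0 : 0 < e.
    rewrite lt_neqAle enorm_ge0 andbT; apply/eqP => /esym /enorm_eq0 /eqP.
    rewrite subr_eq0 => /eqP hp; move: hb; rewrite /b hp -/a; lra.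
  have er : e <= r.
    rewrite /e /p /vh opp_col_mx add_col_mx enorm_col -/d.
    have hz0 : 0 <= enorm (z - zh) := enorm_ge0 R _ _.
    have hz1' : enorm (z - zh) <= kappa * d := hz1.
    have d0 : 0 <= d := enorm_ge0 R _ _.
    rewrite /r /s -[d in X in _ <= X]ger0_norm // -sqrtr_sqr -sqrtrM ?sqr_ge0 //.
    apply: ler_wsqrtr; rewrite mulrDr mulr1 lerD2l -exprMn.
    by rewrite mulrC ler_pXn2r // ?nnegrE ?(le_trans hz0 hz1') // enorm_ge0.
  set al := (w j 0 - a) / (b - a).
  have ba : 0 < b - a by lra.
  have al0 : 0 <= al by apply: divr_ge0; lra.
  have al1 : al < 1 by rewrite /al ltr_pdivrMr // mul1r; lra.
  set t := (al + 1) / 2.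
  have t0 : 0 <= t by apply: divr_ge0; lra.
  have t1 : t < 1 by rewrite /t ltr_pdivrMr //; lra.
  exists (vh + t *: (p - vh)) => _; split.
    rewrite addrAC subrr add0r enormZ ger0_norm // -/e.
    by apply: lt_le_trans er; rewrite gtr_pMl.
  rewrite /Vj /= mulmxDr -scalemxAr mulmxBr.
  have -> : (Hbar G S *m vh + t *: (Hbar G S *m p - Hbar G S *m vh)) j 0 =
            a + t * (b - a) by rewrite /a /b !mxE.
  have -> : t * (b - a) = (w j 0 - a + (b - a)) / 2.
    by rewrite /t /al; field; rewrite gt_eqF.
  lra.
have [qf hqf] := choice claim.
pose rho := \big[Num.max/0]_(j in Bad) enorm (qf j - vh).
have r0 : 0 < r.
  by apply: le_lt_trans (enorm_ge0 R _ (qf j0 - vh)) (proj1 (hqf j0 j0B)).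
have rhor : rho < r.
  apply/bigmax_ltP; split => // j jB; exact: (proj1 (hqf j jB)).
have rsig : (r%:E <= sigma G S w i)%E.
  move: hsig; case: (sigma G S w i) => [sg| |] //=.
  - by rewrite -EFinM lee_fin ler_pdivlMr.
  - by move=> _; exact: leey.
  - rewrite gt0_mulNye ?lte_fin ?invr_gt0 //.
have /ereal_sup_gt [_ [r2 [r20 hr2] <-]] : (rho%:E < sigma G S w i)%E.
  by apply: lt_le_trans rsig; rewrite lte_fin.
rewrite lte_fin => rhor2.
have := hr2 vh vhV.
have JB : [set j : 'I_nc | `[< eball vh r2 `<=` Vj G S w j >]] \subset ~: Bad.
  apply/fintype.subsetP => j; rewrite in_setE /= => /asboolP hJ; rewrite finset.in_setC; apply/negP => jB.
  have [hq1 hq2] := hqf j jB.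
  apply: hq2; apply: hJ; rewrite /eball /=.
  apply: le_trans (ltW rhor2).
  exact: (le_bigmax_cond _ (fun j => enorm (qf j - vh)) jB).
move=> hc; have hJB := subset_leq_card JB.
have hC := cardsC Bad; rewrite card_ord in hC.
have h4 := leq_trans hc hJB.
rewrite -(addnK #|~: Bad| #|Bad|) hC.
apply: leq_trans (leq_sub2l nc h4) _; rewrite subKn //.
Qed.
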